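(* Let $\mathcal{C}=\{c_a : a\in\mathcal{A}^*\}$ be a uniform family of quantum circuits (Alice's quantum computer), and let Bob possess a classical simulation scheme for $\mathcal{C}$. Consider the hypothesis testing scenario described in the context. Then Bob's scheme is an $\epsilon$-simulator of $\mathcal{C}$ if and only if, in this hypothesis testing scenario, there exists a strategy for Bob which jointly achieves indistinguishability and efficiency.
   Context: A uniform family of quantum circuits is $\mathcal{C}=\{c_a : a\in\mathcal{A}^*\}$, indexed by finite strings $a$ over a finite alphabet $\mathcal{A}$, with an efficiently computable map from $a$ to the circuit; $c_a$ acts on $n_a$ qubits, its size and description length are bounded by $\mathrm{poly}(n_a)$, and measuring it yields an outcome in $\{0,1\}^{k_a}$ distributed according to the Born-rule distribution $\mathcal{P}_a$. For distributions $\mathcal{P},\mathcal{P}'$ on a finite set, $\|\mathcal{P}-\mathcal{P}'\|_1=\sum_x|\mathcal{P}(x)-\mathcal{P}'(x)|$, and $B(\mathcal{P},\epsilon)$ is the set of distributions within $L_1$ distance $\epsilon$ of $\mathcal{P}$. A classical (randomized) algorithm is an $\epsilon$-simulator of $\mathcal{C}$ if for every $\epsilon>0$ and every $a\in\mathcal{A}^*$ it outputs a sample from some distribution $\mathcal{P}^\epsilon_a\in B(\mathcal{P}_a,\epsilon)$ in run-time $O(\mathrm{poly}(n_a,1/\epsilon))$. Hypothesis testing scenario: one of Alice or Bob is chosen uniformly at random as ''the candidate''. A referee with unbounded computational power, not knowing the candidate's identity, runs a finite interactive protocol: in each round the referee sends a circuit index $a\in\mathcal{A}^*$ (chosen as a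 function of all previously collected requests and responses), and the candidate returns an outcome; Alice returns a sample from $\mathcal{P}_a$ by running $c_a$, Bob returns the output of his strategy (his response in a round may depend only on the current request and the round number). The referee's rules for choosing requests, for halting, and for deciding between $H_a$ (''data came from Alice'') and $H_b$ (''data came from Bob'') constitute the test; $P_{correct}$ is the probability the referee decides correctly. Bob's strategy may depend on a parameter $\delta>0$; when he uses his simulator, in round $j$ he chooses an accuracy parameter $\epsilon_j$ and his cost in that round is $t_j=\mathrm{poly}(n_{a_j},1/\epsilon_j)$. For a request sequence $\alpha=(a_1,\dots,a_m)$, Alice's resource cost is $N(\alpha)=n_{a_1}+\dots+n_{a_m}$ and Bob's is $T(\alpha)=t_1+\dots+t_m$. Indistinguishability: for every $\delta>0$ and every test, $P_{correct}<\frac12+\delta$. Efficiency: there is a polynomial $f$ such that for all $\delta>0$ and all request sequences $\alpha$, $T(\alpha)\le f(N(\alpha),1/\delta)$.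
   Formalization: An ε-simulator is a scheme for which some rule, depending on ε and a, sets its accuracy parameter so that it samples from a distribution in $B(\mathcal{P}_a,\epsilon)$ in run-time $O(\mathrm{poly}(n_a,1/\epsilon))$, instead of running with parameter ε itself. The paper assumes this as well. *)

(* Defs.v *)
From HB Require Import structures.
From mathcomp Require Import all_boot all_order all_algebra.
From mathcomp Require Import complex.
Set Implicit Arguments. Unset Strict Implicit. Unset Printing Implicit Defensive.
Import Order.TTheory GRing.Theory Num.Theory.
Local Open Scope ring_scope.

Definition bits (m : nat) := (m.-tuple bool).

Definition is_dist (R : numDomainType) (T : finType) (P : {ffun T -> R}) :=
  (forall x, 0 <= P x) /\ \sum_x P x = 1.

Definition L1 (R : numDomainType) (T : finType) (P Q : {ffun T -> R}) : R :=
  \sum_x `|P x - Q x|.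

(* evaluation of a bivariate polynomial f(x,y) (inner variable x, outer y) *)
Definition eval2 (R : comNzRingType) (f : {poly {poly R}}) (x y : R) : R :=
  (f.[y%:P]).[x].

Section Quantum.
Variable R : rcfType.
Local Notation C := R[i].

(* an operator on n qubits, as a matrix indexed by computational basis states:
   U (y, x) = <y|U|x> *)
Definition qop (n : nat) := {ffun bits n * bits n -> C}.

Definition unitary n (U : qop n) : Prop :=
  forall x y : bits n,
    \sum_z (conjc (U (z, x))) * U (z, y) = (x == y)%:R.

(* U acts non-trivially on at most the two qubits i, j *)
Definition agree_off n (i j : 'I_n) (x y : bits n) :=
  forall l : 'I_n, l != i -> l != j -> tnth x l = tnth y l.

Definition two_local n (U : qop n) : Prop :=
  exists i j : 'I_n,
    (forall x y, ~ agree_off i j y x -> U (y, x) = 0) /\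
    (forall x y x' y', agree_off i j y x -> agree_off i j y' x' ->
        tnth x i = tnth x' i -> tnth x j = tnth x' j ->
        tnth y i = tnth y' i -> tnth y j = tnth y' j ->
        U (y, x) = U (y', x')).

(* a circuit: qn qubits initialised in |0...0>, a sequence of gates
   (applied left to right), then measurement of the first qk qubits *)
Record qcircuit := QCircuit {
  qn : nat;
  qk : nat;
  gates : seq (qop qn) }.

Definition wf_circuit (c : qcircuit) : Prop :=
  (qk c <= qn c)%N /\
  (forall U, U \in gates c -> unitary U /\ two_local U).

Definition qsize (c : qcircuit) : nat := size (gates c).

Definition apply_op n (U : qop n) (psi : {ffun bits n -> C}) : {ffun bits n -> C} :=
  [ffun y => \sum_x U (y, x) * psi x].

Definition zero_state n : {ffun bits n -> C} :=
  [ffun x => if x == [tuple of nseq n false] then 1 else 0].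

Definition final_state (c : qcircuit) : {ffun bits (qn c) -> C} :=
  foldl (fun psi U => apply_op U psi) (zero_state (qn c)) (gates c).

Definition sqnorm (z : C) : R := (complex.Re z) ^+ 2 + (complex.Im z) ^+ 2.

Definition born (c : qcircuit) : {ffun bits (qk c) -> R} :=
  [ffun x : bits (qk c) =>
     \sum_(y : bits (qn c) | take (qk c) y == val x) sqnorm (final_state c y)].

End Quantum.

Section Testing.
Variables (Sig : finType) (k : seq Sig -> nat).

(* one collected (request, response) pair *)
Definition hitem := {a : seq Sig & bits (k a)}.

(* A test: the referee plays at most t_len rounds; t_next maps the history
   to the next request (None = halt); t_dec decides, true = H_a ("Alice"),
   false = H_b ("Bob"). The referee is computationally unbounded. *)
Record test := Test {
  t_len : nat;
  t_next : seq hitem -> option (seq Sig);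
  t_dec : seq hitem -> bool }.

Variable R : numFieldType.

(* A responder: in round j (1-based), on request a, returns a fresh sample
   from the distribution resp j a. *)
Definition responder := nat -> forall a : seq Sig, {ffun bits (k a) -> R}.

Fixpoint acc_prob (T : test) (resp : responder) (fuel : nat) (hist : seq hitem) : R :=
  match fuel with
  | 0 => (t_dec T hist)%:R
  | f.+1 =>
      match t_next T hist with
      | None => (t_dec T hist)%:R
      | Some a => \sum_(x : bits (k a))
                    resp (size hist).+1 a x * acc_prob T resp f (rcons hist (existT _ a x))
      end
  end.

Definition prob_Ha (T : test) (resp : responder) : R := acc_prob T resp (t_len T) [::].

(* candidate is Alice or Bob with probability 1/2 each *)
Definition P_correct (T : test) (alice bob : responder) : R :=
  2^-1 * prob_Ha T alice + 2^-1 * (1 - prob_Ha T bob).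

Definition alice_resp (P : forall a, {ffun bits (k a) -> R}) : responder :=
  fun _ a => P a.

(* Bob's classical simulation scheme: on request a with (accuracy) parameter
   theta it outputs a sample of sim a theta, in run-time time a theta. *)
Definition bob_resp (sim : forall a, R -> {ffun bits (k a) -> R})
  (eps : R -> nat -> seq Sig -> R) (delta : R) : responder :=
  fun j a => sim a (eps delta j a).

Definition indistinguishable (P : forall a, {ffun bits (k a) -> R})
  (sim : forall a, R -> {ffun bits (k a) -> R}) (eps : R -> nat -> seq Sig -> R) : Prop :=
  forall delta : R, 0 < delta ->
  forall T : test, P_correct T (alice_resp P) (bob_resp sim eps delta) < 2^-1 + delta.

Definition alice_cost (n : seq Sig -> nat) (alpha : seq (seq Sig)) : R :=
  (\sum_(a <- alpha) n a)%:R.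

Definition bob_cost (time : seq Sig -> R -> R) (eps : R -> nat -> seq Sig -> R)
  (delta : R) (alpha : seq (seq Sig)) : R :=
  \sum_(j < size alpha) time (nth [::] alpha j) (eps delta j.+1 (nth [::] alpha j)).

Definition efficient (n : seq Sig -> nat) (time : seq Sig -> R -> R)
  (eps : R -> nat -> seq Sig -> R) : Prop :=
  exists f : {poly {poly R}},
  forall delta : R, 0 < delta ->
  forall alpha : seq (seq Sig),
    bob_cost time eps delta alpha <= eval2 f (alice_cost n alpha) delta^-1.

(* The scheme is an epsilon-simulator: run with the accuracy parameter set
   (by a fixed rule g) from the requested accuracy eps, it samples from a
   distribution in B(P a, eps) in time bounded by a polynomial in (n a, 1/eps). *)
Definition eps_simulator (n : seq Sig -> nat) (P : forall a, {ffun bits (k a) -> R})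
  (sim : forall a, R -> {ffun bits (k a) -> R}) (time : seq Sig -> R -> R) : Prop :=
  exists (g : R -> seq Sig -> R) (f : {poly {poly R}}),
  forall e : R, 0 < e -> forall a : seq Sig,
    L1 (sim a (g e a)) (P a) <= e /\ time a (g e a) <= eval2 f (n a)%:R e^-1.

End Testing.

(* Main.v *)
Require Import Defs.
From HB Require Import structures.
From mathcomp Require Import all_boot all_order all_algebra.
From mathcomp Require Import complex.
From mathcomp Require Import ring lra zify.
Import Order.TTheory GRing.Theory Num.Theory.
Local Open Scope ring_scope.
Set Implicit Arguments. Unset Strict Implicit.

Section Acc.
Variables (Sig : finType) (k : seq Sig -> nat) (R : realFieldType).

Lemma acc_bounds (T : test k) (resp : responder k R)
  (hd : forall j a, is_dist (resp j a)) f hist :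
  0 <= acc_prob T resp f hist <= 1.
Proof.
elim: f hist => [|f IH] hist /=.
  by case: (t_dec T hist); rewrite ?ler01 ?lexx.
case: (t_next T hist) => [a|]; last by case: (t_dec T hist); rewrite ?ler01 ?lexx.
have [h0 h1] := hd (size hist).+1 a.
apply/andP; split.
  apply: sumr_ge0 => x _; apply: mulr_ge0 => //; by case/andP: (IH (rcons hist (existT _ a x))).
rewrite -h1; apply: ler_sum => x _.
rewrite -[leRHS]mulr1; apply: ler_wpM2l => //; by case/andP: (IH (rcons hist (existT _ a x))).
Qed.

Lemma acc_diff (T : test k) (P : forall a, {ffun bits (k a) -> R})
  (sim : forall a, R -> {ffun bits (k a) -> R}) (eps : R -> nat -> seq Sig -> R) (d : R)
  (hd0 : 0 < d)
  (hP : forall a, is_dist (P a)) (hS : forall a t, is_dist (sim a t))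
  (hL : forall j a, L1 (sim a (eps d j.+1 a)) (P a) <= d / (j.+1 * j.+2)%:R) f hist :
  `| acc_prob T (alice_resp P) f hist - acc_prob T (bob_resp sim eps d) f hist|
     <= d / (size hist).+1%:R.
Proof.
elim: f hist => [|f IH] hist /=.
  by rewrite subrr normr0 divr_ge0 // ltW.
case: (t_next T hist) => [a|]; last by rewrite subrr normr0 divr_ge0 // ltW.
rewrite /alice_resp /bob_resp.
set Q := sim a _.
set A := fun x => acc_prob T (fun _ a0 => P a0) f (rcons hist (existT _ a x)).
set B := fun x => acc_prob T (fun j a0 => sim a0 (eps d j a0)) f (rcons hist (existT _ a x)).
have -> : \sum_x P a x * A x - \sum_x Q x * B x =
   \sum_x (P a x - Q x) * A x + \sum_x Q x * (A x - B x).
  rewrite -sumrB -big_split /=; apply: eq_bigr => x _; ring.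
have hA : forall x, 0 <= A x <= 1.
  move=> x; apply: acc_bounds => j a0; exact: hP.
have [hQ0 hQ1] := hS a (eps d (size hist).+1 a).
apply: le_trans (ler_normD _ _) _.
apply: le_trans (lerD (ler_norm_sum _ _ _) (ler_norm_sum _ _ _)) _.
apply: le_trans (lerD (y := L1 Q (P a)) (t := d / (size hist).+2%:R) _ _) _.
- rewrite /L1; apply: ler_sum => x _; rewrite normrM distrC.
  rewrite -[leRHS]mulr1; apply: ler_wpM2l => //.
  by case/andP: (hA x) => h1 h2; rewrite ger0_norm.
- apply: (@le_trans _ _ (\sum_x Q x * (d / (size hist).+2%:R))) .
    apply: ler_sum => x _; rewrite normrM ger0_norm //; apply: ler_wpM2l => //.
    by have := IH (rcons hist (existT _ a x)); rewrite size_rcons.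
  by rewrite -mulr_suml hQ1 mul1r.
- apply: le_trans (lerD (hL (size hist) a) (lexx _)) _.
  rewrite le_eqVlt; apply/orP; left; apply/eqP.
  set s := size hist.
  rewrite -[s.+2]addn1 -[s.+1]addn1 !natrM !natrD.
  have h1 : (s%:R + 1 : R) != 0 by rewrite natr1 pnatr_eq0.
  have h2 : (s%:R + 1 + 1 : R) != 0 by rewrite !natr1 pnatr_eq0.
  field; rewrite ?h1 ?h2 //.
Qed.
End Acc.

Section Q.
Variable R : rcfType.
Local Notation C := R[i].

Lemma sqnormC (z : C) : (sqnorm z)%:C%C = z * conjc z.
Proof.
case: z => a b; rewrite /sqnorm /=; apply/eqP; rewrite eq_complex /=.
apply/andP; split; apply/eqP; ring.
Qed.

Lemma sqnorm_ge0 (z : C) : 0 <= sqnorm z.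
Proof. by rewrite /sqnorm addr_ge0 // sqr_ge0. Qed.

Lemma apply_op_norm n (U : qop R n) psi : unitary U ->
  \sum_y sqnorm (apply_op U psi y) = \sum_x sqnorm (psi x).
Proof.
move=> hU; apply: (@complexI R).
rewrite !rmorph_sum /=.
under eq_bigr => y _ do rewrite sqnormC ffunE rmorph_sum /= mulr_sumr.
under [RHS]eq_bigr => y _ do rewrite sqnormC.
rewrite exchange_big /=.
apply: eq_bigr => x _.
under eq_bigr => y _ do rewrite mulr_suml.
rewrite exchange_big /=.
rewrite (bigD1 x) //= [X in _ + X]big1 ?addr0.
  have h : \sum_z (conjc (U (z, x))) * U (z, x) = 1 by rewrite hU eqxx.
  rewrite -[RHS]mulr1 -[1 in RHS]conjc1 -h rmorph_sum /= mulr_sumr.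
  apply: eq_bigr => z _; rewrite !rmorphM /= conjcK; ring.
move=> x' hx'.
have h : \sum_z (conjc (U (z, x'))) * U (z, x) = 0 by rewrite hU (negbTE hx').
transitivity (psi x' * conjc (psi x) * conjc (\sum_z (conjc (U (z, x'))) * U (z, x))); last first.
  by rewrite h conjc0 mulr0.
rewrite rmorph_sum /= mulr_sumr.
apply: eq_bigr => z _; rewrite !rmorphM /= conjcK; ring.
Qed.

Lemma zero_norm n : \sum_x sqnorm (zero_state R n x) = 1.
Proof.
rewrite (bigD1 [tuple of nseq n false]) //= big1 ?addr0.
  by rewrite ffunE eqxx /sqnorm /= expr0n /= addr0 expr1n.
by move=> x /negbTE hx; rewrite ffunE hx /sqnorm /= expr0n /= addr0.
Qed.

Lemma foldl_norm n (gs : seq (qop R n)) psi : (forall U, U \in gs -> unitary U) ->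
  \sum_x sqnorm (foldl (fun psi U => apply_op U psi) psi gs x) = \sum_x sqnorm (psi x).
Proof.
elim: gs psi => [|U gs IH] psi hU //=.
rewrite IH ?apply_op_norm //; first by apply: hU; rewrite mem_head.
by move=> V hV; apply: hU; rewrite in_cons hV orbT.
Qed.

Lemma born_dist (c : qcircuit R) : wf_circuit c -> is_dist (born c).
Proof.
case=> hk hg; split.
  by move=> x; rewrite ffunE; apply: sumr_ge0 => y _; exact: sqnorm_ge0.
have -> : \sum_x born c x = \sum_y sqnorm (final_state c y).
  set x0 : bits (qk c) := [tuple of nseq (qk c) false].
  pose p (y : bits (qn c)) : bits (qk c) := insubd x0 (take (qk c) y).
  rewrite (partition_big p xpredT) //=.
  apply: eq_bigr => x _; rewrite ffunE; apply: eq_bigl => y.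
  have hv : val (p y) = take (qk c) y.
    have hs : size (take (qk c) y) == qk c.
      rewrite size_take size_tuple; by case: ltngtP hk => // ->.
    by rewrite /p insubdK.
  by rewrite -hv (inj_eq val_inj).
rewrite /final_state foldl_norm ?zero_norm //.
by move=> U /hg [].
Qed.
End Q.

Section PB.
Variable R : realFieldType.

Lemma powmono (x y : R) n : 0 <= x -> x <= y -> x ^+ n <= y ^+ n.
Proof. move=> h0 h1; apply: lerXn2r => //; rewrite nnegrE //; exact: le_trans h1. Qed.

Lemma powmono2 (x : R) m n : 1 <= x -> (m <= n)%N -> x ^+ m <= x ^+ n.
Proof. by move=> h1 h2; apply: ler_weXn2l. Qed.

Definition pC (p : {poly R}) := \sum_(i < size p) `|p`_i|.

Lemma pC_ge0 p : 0 <= pC p.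
Proof. by apply: sumr_ge0 => i _. Qed.

Lemma mono_bound (p : {poly R}) x : 0 <= x ->
  `|p.[x]| <= pC p * (1 + x) ^+ size p.
Proof.
move=> hx; rewrite horner_coef /pC mulr_suml.
apply: le_trans (ler_norm_sum _ _ _) _; apply: ler_sum => i _.
rewrite normrM normrX (ger0_norm hx); apply: ler_wpM2l => //.
apply: (@le_trans _ _ ((1 + x) ^+ i)).
  apply: powmono => //; lra.
apply: powmono2; first lra.
exact: ltnW.
Qed.

Lemma eval2E (f : {poly {poly R}}) x y :
  eval2 f x y = \sum_(i < size f) (f`_i).[x] * y ^+ i.
Proof.
rewrite /eval2 (horner_coef f) horner_sum; apply: eq_bigr => i _.
by rewrite hornerM -rmorphXn /= hornerC.
Qed.

Definition fD (f : {poly {poly R}}) := (size f + \sum_(i < size f) size (f`_i)%R)%N.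
Definition fK (f : {poly {poly R}}) := \sum_(i < size f) pC (f`_i).

Lemma bi_bound (f : {poly {poly R}}) x y : 0 <= x -> 0 <= y ->
  eval2 f x y <= fK f * (1 + x) ^+ fD f * (1 + y) ^+ fD f.
Proof.
move=> hx hy; rewrite eval2E.
apply: le_trans (ler_norm _) _.
apply: le_trans (ler_norm_sum _ _ _) _.
rewrite /fK !mulr_suml; apply: ler_sum => i _.
rewrite normrM normrX (ger0_norm hy).
apply: ler_pM.
- by [].
- by rewrite exprn_ge0.
- apply: le_trans (mono_bound _ hx) _; apply: ler_wpM2l; first exact: pC_ge0.
  apply: powmono2; first lra.
  rewrite /fD (bigD1 i) //= addnCA; exact: leq_addr.
- apply: (@le_trans _ _ ((1 + y) ^+ i)); first by apply: powmono => //; lra.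
  apply: powmono2; first lra.
  rewrite /fD; apply: leq_trans (leq_addr _ _); exact: ltnW.
Qed.
End PB.

Lemma fK_ge0 (R : realFieldType) (f : {poly {poly R}}) : 0 <= fK f.
Proof. by apply: sumr_ge0 => i _; apply: pC_ge0. Qed.

Lemma size_le_sum (T : Type) (n : T -> nat) (alpha : seq T) :
  (forall a, 0 < n a)%N -> (size alpha <= \sum_(a <- alpha) n a)%N.
Proof.
move=> hn; elim: alpha => [|a al IH]; first by rewrite big_nil.
by rewrite big_cons /= -add1n; apply: leq_add.
Qed.

Lemma nth_le_sum (T : Type) (n : T -> nat) (alpha : seq T) x0 j :
  (n (nth x0 alpha j) <= \sum_(a <- alpha) n a)%N \/ (size alpha <= j)%N.
Proof.
elim: alpha j => [|a al IH] j; first by right.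
case: j => [|j] /=; first by left; rewrite big_cons leq_addr.
case: (IH j) => h; [left | by right].
by rewrite big_cons; apply: leq_trans h (leq_addl _ _).
Qed.

Unset Implicit Arguments.

Theorem theorem1 (R : rcfType) (Sig : finType)
  (c : seq Sig -> qcircuit R)
  (hwf : forall a, wf_circuit (c a))
  (hn : forall a, (0 < qn (c a))%N)
  (psize : {poly R}) (hsize : forall a, (qsize (c a))%:R <= psize.[(qn (c a))%:R])
  (sim : forall a : seq Sig, R -> {ffun bits (qk (c a)) -> R})
  (time : seq Sig -> R -> R)
  (hsim : forall a theta, is_dist (sim a theta)) :
  eps_simulator (fun a => qn (c a)) (fun a => born (c a)) sim time <->
  exists eps : R -> nat -> seq Sig -> R,
    indistinguishable (fun a => born (c a)) sim eps /\
    efficient (fun a => qn (c a)) time eps.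
Proof.
have hborn a : is_dist (born (c a)) by apply: born_dist.
split.
- case=> g [f hgf].
  pose eps (d : R) (j : nat) (a : seq Sig) := g (d / (j * j.+1)%:R) a.
  have hpos (d : R) (j : nat) : 0 < d -> 0 < d / (j.+1 * j.+2)%:R.
    by move=> hd; rewrite divr_gt0 // ltr0n muln_gt0.
  exists eps; split.
  + move=> d hd T.
    have hL j a : L1 (sim a (eps d j.+1 a)) (born (c a)) <= d / (j.+1 * j.+2)%:R.
      by have [] := hgf _ (hpos d j hd) a.
    have h := acc_diff T hd hborn hsim hL (t_len T) [::].
    rewrite /= divr1 in h.
    have h2 := le_trans (ler_norm _) h.
    rewrite /P_correct /prob_Ha.
    move: h2; set A := acc_prob _ _ _ _; set B := acc_prob _ _ _ _ => h2.
    lra.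
  + pose K := fK f; pose D := fD f.
    exists ((K *: ('X * (1 + 'X) ^+ D))%:P * (1 + (2%:R *: 'X ^+ 2)%:P * 'X) ^+ D).
    move=> d hd alpha.
    set Nn := (\sum_(a <- alpha) qn (c a))%N.
    have hsz : (size alpha <= Nn)%N by apply: size_le_sum.
    set Kt := K * (1 + Nn%:R) ^+ D * (1 + 2 * Nn%:R ^+ 2 * d^-1) ^+ D.
    have hKt : 0 <= Kt.
      rewrite /Kt; apply: mulr_ge0; first apply: mulr_ge0.
      - exact: fK_ge0.
      - by apply: exprn_ge0; rewrite addr_ge0.
      - apply: exprn_ge0; apply: addr_ge0 => //; apply: mulr_ge0.
          by apply: mulr_ge0 => //; exact: exprn_ge0.
        by rewrite invr_ge0 ltW.
    have -> : eval2 ((K *: ('X * (1 + 'X) ^+ D))%:P * (1 + (2%:R *: 'X ^+ 2)%:P * 'X) ^+ D)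
        (alice_cost R (fun a => qn (c a)) alpha) d^-1 = Nn%:R * Kt.
      rewrite /eval2 /alice_cost /Kt -!polyC1 !(hornerM, hornerD, hornerC, horner_exp, hornerX, hornerZ, hornerXn); ring.
    rewrite /bob_cost.
    apply: (@le_trans _ _ (\sum_(j < size alpha) Kt)).
      apply: ler_sum => j _.
      set a := nth [::] alpha j.
      have [_ ht] := hgf _ (hpos d j hd) a.
      apply: le_trans ht _.
      have hna : (qn (c a) <= Nn)%N.
        case: (nth_le_sum (fun a => qn (c a)) alpha [::] j) => //.
        by rewrite leqNgt ltn_ord.
      have hr : (j.+1 * j.+2 <= 2 * Nn ^ 2)%N.
        have h1 : (j.+1 <= Nn)%N by apply: leq_trans hsz.
        have h3 := ltn_ord j.
        nia.
      apply: le_trans (bi_bound f _ _) _.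
      + by [].
      + by rewrite invr_ge0 divr_ge0 // ltW.
      rewrite invf_div /Kt; apply: ler_pM.
      - by apply: mulr_ge0; [exact: fK_ge0 | apply: exprn_ge0; rewrite addr_ge0].
      - by apply: exprn_ge0; rewrite addr_ge0 // divr_ge0 // ltW.
      - apply: ler_wpM2l; first exact: fK_ge0.
        by apply: powmono; [rewrite addr_ge0 | rewrite lerD2l ler_nat].
      - apply: powmono; first by rewrite addr_ge0 // divr_ge0 // ltW.
        rewrite lerD2l; apply: ler_wpM2r; first by rewrite invr_ge0 ltW.
        by rewrite -natrX -natrM ler_nat.
    rewrite sumr_const card_ord -[Kt *+ _]mulr_natl.
    by apply: ler_wpM2r => //; rewrite ler_nat.
- case=> eps [hind [f hf]].
  exists (fun e a => eps (e / 4) 1%N a).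
  exists (f \Po ((4 : R)%:P%:P * 'X)).
  move=> e he a.
  have hd : 0 < e / 4 by rewrite divr_gt0.
  split.
  + set Q := sim a (eps (e / 4) 1%N a); set P := born (c a).
    pose T := Test (k := fun a => qk (c a)) 1%N (fun _ => Some a)
      (fun h => [exists x, (h == [:: Tagged (fun a => bits (qk (c a))) x]) && (Q x <= P x)]).
    have := hind _ hd T.
    rewrite /P_correct /prob_Ha /= /alice_resp /bob_resp -/Q.
    have hdec x : [exists y, ([:: Tagged (fun a => bits (qk (c a))) x] ==
                              [:: Tagged (fun a => bits (qk (c a))) y]) && (Q y <= P y)]
                  = (Q x <= P x).
      apply/existsP/idP => [[y /andP [h1 h2]] | h]; last by exists x; rewrite eqxx.
      move: h1; rewrite eqseq_cons andbT eq_Tagged /= => /eqP ->; exact: h2.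
    under eq_bigr => x _ do rewrite hdec.
    under [X in _ * (1 - X)]eq_bigr => x _ do rewrite hdec.
    rewrite -/P.
    have [hP0 hP1] := hborn a.
    have [hQ0 hQ1] := hsim a (eps (e / 4) 1%N a).
    rewrite -/P -/Q in hP0 hP1 hQ0 hQ1.
    have hid : L1 Q P = 2 * (\sum_x P x * (Q x <= P x)%R%:R - \sum_x Q x * (Q x <= P x)%R%:R)
                        - (\sum_x P x - \sum_x Q x).
      rewrite /L1 -!sumrB mulr_sumr -sumrB; apply: eq_bigr => x _.
      case: (lerP (Q x) (P x)) => h /=.
      * ring.
      * ring.
    rewrite hid hP1 hQ1 => H; lra.
  + have := hf (e / 4) hd [:: a].
    rewrite /bob_cost /alice_cost /= big_ord1 big_seq1 /=.
    move=> h; apply: le_trans h _.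
    rewrite /eval2 horner_comp hornerM hornerC hornerX invf_div.
    by rewrite -polyCM mulrC.
Qed.
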